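(* For every triangle $ABC$ with $b=c>a$, we have $AX_2<AX_{15}<AX_{17}$; that is, in the isosceles order, $X_2\prec X_{15}\prec X_{17}$.
   Context: $X_n$ denotes the $n$-th triangle center listed in Kimberling's Encyclopedia of Triangle Centers (ETC), given by barycentric coordinates in terms of $a=BC$, $b=CA$, $c=AB$. The isosceles order: $P\prec Q$ if $P$ is closer to $A$ than $Q$ in every isosceles triangle $ABC$ with $b=c>a$. *)

(* Defs.v *)
From Stdlib Require Import Reals.
Open Scope R_scope.

Definition point := (R * R)%type.

Definition edist (P Q : point) : R :=
  sqrt ((fst P - fst Q) ^ 2 + (snd P - snd Q) ^ 2).

Definition noncollinear (A B C : point) : Prop :=
  (fst B - fst A) * (snd C - snd A) - (snd B - snd A) * (fst C - fst A) <> 0.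

(* Point with (unnormalized) barycentric coordinates u : v : w w.r.t. ABC. *)
Definition bary (A B C : point) (u v w : R) : point :=
  ((u * fst A + v * fst B + w * fst C) / (u + v + w),
   (u * snd A + v * snd B + w * snd C) / (u + v + w)).

(* Conway notation in terms of the side lengths a = BC, b = CA, c = AB:
   S = twice the area (Heron), S_A = (b^2+c^2-a^2)/2, etc. *)
Definition ConwayS (a b c : R) : R :=
  sqrt ((a + b + c) * (- a + b + c) * (a - b + c) * (a + b - c)) / 2.
Definition ConwaySA (a b c : R) : R := (b ^ 2 + c ^ 2 - a ^ 2) / 2.

Definition X2 (A B C : point) : point := bary A B C 1 1 1.

(* X(15), 1st isodynamic point: trilinears sin(A + pi/3),
   barycentrics a^2 (sqrt3 S_A + S) : ... *)
Definition X15 (A B C : point) : point :=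
  let a := edist B C in let b := edist C A in let c := edist A B in
  let S := ConwayS a b c in
  bary A B C (a ^ 2 * (sqrt 3 * ConwaySA a b c + S))
             (b ^ 2 * (sqrt 3 * ConwaySA b c a + S))
             (c ^ 2 * (sqrt 3 * ConwaySA c a b + S)).

(* X(17), 1st Napoleon point: trilinears csc(A + pi/6),
   barycentrics 1/(S_A + sqrt3 S) : ... *)
Definition X17 (A B C : point) : point :=
  let a := edist B C in let b := edist C A in let c := edist A B in
  let S := ConwayS a b c in
  bary A B C (/ (ConwaySA a b c + sqrt 3 * S))
             (/ (ConwaySA b c a + sqrt 3 * S))
             (/ (ConwaySA c a b + sqrt 3 * S)).

(* Main.v *)
Require Import Defs.
From Stdlib Require Import Reals Lra Psatz.
Open Scope R_scope.

Lemma dist_bary (ax ay bx by0 cx cy : R) (u v : R) : u + 2 * v <> 0 ->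
  edist (ax, ay) (bary (ax, ay) (bx, by0) (cx, cy) u v v) =
  Rabs (v / (u + 2 * v)) *
  sqrt ((bx + cx - 2 * ax) ^ 2 + (by0 + cy - 2 * ay) ^ 2).
Proof.
  intros Hn.
  unfold edist, bary; simpl.
  rewrite <- sqrt_Rsqr_abs. rewrite <- sqrt_mult_alt by (unfold Rsqr; nra).
  f_equal. unfold Rsqr.
  assert (u + v + v <> 0) by lra. field. auto.
Qed.

Lemma sqrt_sq_eq x : 0 <= x -> sqrt x ^ 2 = x.
Proof. intros; simpl; rewrite Rmult_1_r; apply sqrt_sqrt; auto. Qed.

Theorem theorem3p2 (A B C : point) :
  noncollinear A B C ->
  edist C A = edist A B ->
  edist C A > edist B C ->
  edist A (X2 A B C) < edist A (X15 A B C) /\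
  edist A (X15 A B C) < edist A (X17 A B C).
Proof.
  intros Hnc Hbc Hba.
  destruct A as [ax ay]; destruct B as [bx by0]; destruct C as [cx cy].
  unfold noncollinear in Hnc; simpl in Hnc.
  set (a := edist (bx,by0) (cx,cy)) in *.
  set (b := edist (cx,cy) (ax,ay)) in *.
  set (SS := ConwayS a b b).
  set (r := sqrt 3).
  assert (Ha2 : a ^ 2 = (bx - cx) ^ 2 + (by0 - cy) ^ 2).
  { unfold a, edist; apply sqrt_sq_eq; apply Rplus_le_le_0_compat; apply pow2_ge_0. }
  assert (Hb2 : b ^ 2 = (cx - ax) ^ 2 + (cy - ay) ^ 2).
  { unfold b, edist; apply sqrt_sq_eq; apply Rplus_le_le_0_compat; apply pow2_ge_0. }
  assert (Hc2 : b ^ 2 = (ax - bx) ^ 2 + (ay - by0) ^ 2).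
  { rewrite Hbc; unfold edist; apply sqrt_sq_eq; apply Rplus_le_le_0_compat; apply pow2_ge_0. }
  assert (Ha0 : 0 <= a) by (unfold a, edist; apply sqrt_pos).
  assert (Hapos : 0 < a).
  { destruct (Req_dec a 0) as [E|E]; [|lra].
    exfalso. apply Hnc. assert (a ^ 2 = 0) by (rewrite E; field).
    simpl in Ha2.
    assert (bx - cx = 0) by nra. assert (by0 - cy = 0) by nra.
    replace cx with bx by lra. replace cy with by0 by lra. field. }
  set (K := (bx + cx - 2 * ax) ^ 2 + (by0 + cy - 2 * ay) ^ 2).
  assert (HK : K = 4 * b ^ 2 - a ^ 2) by (unfold K; simpl in *; nra).
  assert (HsK : 0 < sqrt K) by (apply sqrt_lt_R0; nra).
  assert (Hr2 : r ^ 2 = 3) by (unfold r; apply sqrt_sq_eq; lra).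
  assert (Hr : 0 < r) by (unfold r; apply sqrt_lt_R0; lra).
  assert (HS2 : SS ^ 2 = a ^ 2 * (4 * b ^ 2 - a ^ 2) / 4).
  { unfold SS, ConwayS.
    replace ((a + b + b) * (- a + b + b) * (a - b + b) * (a + b - b))
      with (a ^ 2 * (4 * b ^ 2 - a ^ 2)) by field.
    replace ((sqrt (a ^ 2 * (4 * b ^ 2 - a ^ 2)) / 2) ^ 2)
      with ((sqrt (a ^ 2 * (4 * b ^ 2 - a ^ 2))) ^ 2 / 4) by field.
    rewrite sqrt_sq_eq; [reflexivity| nra]. }
  assert (HS : 0 < SS).
  { unfold SS, ConwayS. apply Rdiv_lt_0_compat; [|lra]. apply sqrt_lt_R0. nra. }
  assert (E2 : X2 (ax,ay) (bx,by0) (cx,cy) = bary (ax,ay) (bx,by0) (cx,cy) 1 1 1) by reflexivity.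
  set (u15 := a ^ 2 * (r * ((2 * b ^ 2 - a ^ 2) / 2) + SS)).
  set (v15 := b ^ 2 * (r * (a ^ 2 / 2) + SS)).
  assert (E15 : X15 (ax,ay) (bx,by0) (cx,cy) = bary (ax,ay) (bx,by0) (cx,cy) u15 v15 v15).
  { unfold X15. cbv zeta. fold a b. rewrite <- Hbc. fold SS r.
    unfold u15, v15, ConwaySA. f_equal; field. }
  set (P := (2 * b ^ 2 - a ^ 2) / 2 + r * SS).
  set (Q := a ^ 2 / 2 + r * SS).
  assert (HP : 0 < P).
  { unfold P. apply Rplus_lt_0_compat; [apply Rdiv_lt_0_compat; nra|]. apply Rmult_lt_0_compat; lra. }
  assert (HQ : 0 < Q).
  { unfold Q. apply Rplus_lt_0_compat; [apply Rdiv_lt_0_compat; nra|]. apply Rmult_lt_0_compat; lra. }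
  assert (E17 : X17 (ax,ay) (bx,by0) (cx,cy) = bary (ax,ay) (bx,by0) (cx,cy) (/ P) (/ Q) (/ Q)).
  { unfold X17. cbv zeta. fold a b. rewrite <- Hbc. fold SS r.
    unfold P, Q, ConwaySA. f_equal; f_equal; field. }
  assert (Hu15 : 0 < u15).
  { unfold u15. apply Rmult_lt_0_compat; [nra|]. apply Rplus_lt_0_compat; [|lra].
    apply Rmult_lt_0_compat; [lra|]. apply Rdiv_lt_0_compat; nra. }
  assert (Hv15 : 0 < v15).
  { unfold v15. apply Rmult_lt_0_compat; [nra|]. apply Rplus_lt_0_compat; [|lra].
    apply Rmult_lt_0_compat; [lra|]. apply Rdiv_lt_0_compat; nra. }
  rewrite E2, E15, E17.
  rewrite !dist_bary; fold K.
  2: { assert (0 < / P) by (apply Rinv_0_lt_compat; auto).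
       assert (0 < / Q) by (apply Rinv_0_lt_compat; auto). lra. }
  2: lra. 2: lra.
  assert (T17 : / Q / (/ P + 2 * / Q) = P / (Q + 2 * P)) by (field; lra).
  rewrite T17.
  assert (Hsr : SS - r * (a ^ 2 / 2) > 0).
  { assert (SS ^ 2 - (r * (a ^ 2 / 2)) ^ 2 > 0).
    { replace ((r * (a ^ 2 / 2)) ^ 2) with (r ^ 2 * a ^ 4 / 4) by field.
      rewrite Hr2, HS2.
      replace (a ^ 2 * (4 * b ^ 2 - a ^ 2) / 4 - 3 * a ^ 4 / 4) with (a ^ 2 * (b ^ 2 - a ^ 2)) by field.
      apply Rmult_lt_0_compat; nra. }
    assert (0 < r * (a ^ 2 / 2)) by (apply Rmult_lt_0_compat; [lra| apply Rdiv_lt_0_compat; nra]).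
    set (y := r * (a ^ 2 / 2)) in *. clearbody y. nra. }
  assert (Hvu : v15 - u15 > 0).
  { replace (v15 - u15) with ((b ^ 2 - a ^ 2) * (SS - r * (a ^ 2 / 2)))
      by (unfold u15, v15; field).
    apply Rmult_lt_0_compat; nra. }
  assert (Hkey : P * u15 - v15 * Q > 0).
  { replace (P * u15 - v15 * Q) with
      (((2 * b ^ 2 - a ^ 2) / 2 - a ^ 2 / 2) *
       (r * (a ^ 2 * (4 * b ^ 2 - a ^ 2) / 4 - SS ^ 2) + (1 + r ^ 2) * (a ^ 2 / 2) * SS))
      by (unfold P, Q, u15, v15; field).
    rewrite HS2, Hr2.
    replace ((2 * b ^ 2 - a ^ 2) / 2 - a ^ 2 / 2) with (b ^ 2 - a ^ 2) by field.
    apply Rmult_lt_0_compat; [nra|].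
    replace (a ^ 2 * (4 * b ^ 2 - a ^ 2) / 4 - a ^ 2 * (4 * b ^ 2 - a ^ 2) / 4) with 0 by field.
    replace (r * 0 + (1 + 3) * (a ^ 2 / 2) * SS) with (2 * a ^ 2 * SS) by field.
    apply Rmult_lt_0_compat; nra. }
  assert (Ht15 : 1 / (1 + 2 * 1) < v15 / (u15 + 2 * v15)).
  { apply Rminus_gt_0_lt.
    replace (v15 / (u15 + 2 * v15) - 1 / (1 + 2 * 1))
      with ((v15 - u15) / (3 * (u15 + 2 * v15))) by (field; lra).
    apply Rdiv_lt_0_compat; lra. }
  assert (Ht17 : v15 / (u15 + 2 * v15) < P / (Q + 2 * P)).
  { apply Rminus_gt_0_lt.
    replace (P / (Q + 2 * P) - v15 / (u15 + 2 * v15))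
      with ((P * u15 - v15 * Q) / ((Q + 2 * P) * (u15 + 2 * v15))) by (field; lra).
    apply Rdiv_lt_0_compat; [lra|]. apply Rmult_lt_0_compat; lra. }
  assert (0 < v15 / (u15 + 2 * v15)) by (apply Rdiv_lt_0_compat; lra).
  rewrite !Rabs_pos_eq by lra.
  split; apply Rmult_lt_compat_r; auto.
Qed.
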